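(* Let $G$ be a signed digraph on vertex set $\{1,\dots,n\}$ and let $H$ be a spanning subgraph of $G$ such that (i) $G$ has no arc from a sink of $H$ to a source of $H$, and (ii) $G$ has no arc (from any vertex) to a vertex that is isolated in $H$. Let $A$ be the set of sources of $H$ that are not sources of $G$, and $B$ the set of sinks of $H$ that are not sinks of $G$. Let $h:Y\to Y$ be a degree-bounded finite dynamical system on $H$ and let $\xi\in Y$. Then there exists a degree-bounded finite dynamical system $f:X\to X$ on $G$, with $Y\subseteq X$, such that: (1) $f(X)\subseteq Y$; (2) $f_i(X)\subseteq h_i(Y)$ for all $i\notin A$; (3) $f(x)=h(x)$ for all $x\in Y$ with $x_i=\xi_i$ for all $i\in B$; (4) $f_i(x)=h_i(x)$ for all $x\in Y$ and all vertices $i$ with $G_i\cap B=\emptyset$.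
   Context: A finite dynamical system (FDS) with $n$ components is a map $f=(f_1,\dots,f_n):X\to X$ where $X=X_1\times\cdots\times X_n$ and each $X_i$ is a nonempty finite interval of integers. A signed digraph is a pair $G=(V,E)$ with $E\subseteq V\times V\times\{+,-\}$; $(j,i,s)\in E$ is an arc from $j$ to $i$ of sign $s$ (loops allowed; $G$ may have both a positive and a negative arc from $j$ to $i$). $G_i$ denotes the set of $j$ having an arc to $i$ in $G$. In-degree $d^{\mathrm{in}}_G(i)$ and out-degree $d^{\mathrm{out}}_G(i)$ count arcs entering/leaving $i$, positive and negative arcs counted separately. A source has in-degree $0$, a sink out-degree $0$, an isolated vertex both. A spanning subgraph has the same vertex set and a subset of the arcs. The interaction graph of an FDS $f$ is the signed digraph on $\{1,\dots,n\}$ with a positive (resp. negative) arc from $j$ to $i$ iff there is $x\in X$ with $x_j<\max(X_j)$ and $f_i(x+e_j)-f_i(x)$ positive (resp. negative), $e_j$ the $j$-th unit vector; $f$ is an FDS on $G$ if $G$ is its interaction graph. $f$ is degree-bounded if, with $G$ its interaction graph, for every $i$: $|X_i|=2$ if $d^{\mathrm{out}}_G(i)=0<d^{\mathrm{in}}_G(i)$, and $|X_i|\le d^{\mathrm{out}}_G(i)+1$ otherwise. *)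

(* Defs.v *)
From mathcomp Require Import all_boot all_order all_algebra.
Set Implicit Arguments. Unset Strict Implicit. Unset Printing Implicit Defensive.
Import Order.TTheory GRing.Theory Num.Theory.
Local Open Scope ring_scope.

(* Vertices are 'I_n (i.e. {1..n} shifted to {0..n-1}). A state of an FDS
   with n components is an integer vector. *)
Definition state (n : nat) := {ffun 'I_n -> int}.

(* The box X = X_1 x ... x X_n with X_i = [lo i, hi i] (integers). *)
Definition inbox n (lo hi : 'I_n -> int) (x : state n) : Prop :=
  forall i, lo i <= x i <= hi i.

(* f is an FDS on the box [lo,hi]: intervals nonempty and f maps X into X
   (values of f outside X are irrelevant). *)
Definition is_fds n (lo hi : 'I_n -> int) (f : state n -> state n) : Prop :=
  (forall i, lo i <= hi i) /\ (forall x, inbox lo hi x -> inbox lo hi (f x)).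

(* Signed digraph on 'I_n: an arc ((j, i), s) goes from j to i with sign s
   (true = positive, false = negative). *)
Definition sgraph (n : nat) := {set 'I_n * 'I_n * bool}.

Definition indeg n (G : sgraph n) (i : 'I_n) : nat :=
  #|[set e in G | e.1.2 == i]|.
Definition outdeg n (G : sgraph n) (i : 'I_n) : nat :=
  #|[set e in G | e.1.1 == i]|.

Definition is_source n (G : sgraph n) i := indeg G i == 0%N.
Definition is_sink n (G : sgraph n) i := outdeg G i == 0%N.
Definition is_isolated n (G : sgraph n) i := is_source G i && is_sink G i.

Definition incr n (x : state n) (j : 'I_n) : state n :=
  [ffun k => x k + (k == j)%:Z].

Definition has_arc n (lo hi : 'I_n -> int) (f : state n -> state n)
  (j i : 'I_n) (s : bool) : Prop :=
  exists x, [/\ inbox lo hi x, x j < hi j &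
    (if s then 0 < f (incr x j) i - f x i else f (incr x j) i - f x i < 0)].

Definition is_interaction_graph n (lo hi : 'I_n -> int)
  (f : state n -> state n) (G : sgraph n) : Prop :=
  forall j i s, ((j, i), s) \in G <-> has_arc lo hi f j i s.

Definition fds_on n (lo hi : 'I_n -> int) (f : state n -> state n)
  (G : sgraph n) : Prop :=
  is_fds lo hi f /\ is_interaction_graph lo hi f G.

(* Degree-boundedness w.r.t. a given graph; |X_i| = hi i - lo i + 1. *)
Definition deg_bounded_wrt n (lo hi : 'I_n -> int) (G : sgraph n) : Prop :=
  forall i,
    if (outdeg G i == 0%N) && (0 < indeg G i)%N
    then hi i - lo i + 1 = 2
    else hi i - lo i + 1 <= (outdeg G i).+1%:Z.

Definition degree_bounded n (lo hi : 'I_n -> int) (f : state n -> state n)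
  : Prop :=
  forall G, is_interaction_graph lo hi f G -> deg_bounded_wrt lo hi G.

(* Main.v *)
Require Import Defs.
From mathcomp Require Import all_boot all_order all_algebra zify.
From Stdlib Require Import Classical.
Import Order.TTheory GRing.Theory Num.Theory.
Local Open Scope ring_scope.
Set Implicit Arguments. Unset Strict Implicit. Unset Printing Implicit Defensive.

Lemma sinkP n (K : sgraph n) j :
  reflect (forall i s, ((j,i),s) \notin K) (is_sink K j).
Proof.
rewrite /is_sink /outdeg cards_eq0; apply: (iffP eqP) => [E i s|H].
  apply/negP => Hin; have : ((j,i),s) \in [set e in K | e.1.1 == j] by rewrite inE Hin eqxx.
  by rewrite E inE.
apply/setP => -[[a b] s]; rewrite !inE /=; apply/negP => /andP[Hin /eqP Ea].
by subst a; move: (H b s); rewrite Hin.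
Qed.

Lemma sourceP n (K : sgraph n) i :
  reflect (forall j s, ((j,i),s) \notin K) (is_source K i).
Proof.
rewrite /is_source /indeg cards_eq0; apply: (iffP eqP) => [E j s|H].
  apply/negP => Hin; have : ((j,i),s) \in [set e in K | e.1.2 == i] by rewrite inE Hin eqxx.
  by rewrite E inE.
apply/setP => -[[a b] s]; rewrite !inE /=; apply/negP => /andP[Hin /eqP Ea].
by subst b; move: (H a s); rewrite Hin.
Qed.

Definition upd n (w : state n) (k : 'I_n) (a : int) : state n :=
  [ffun l => if l == k then a else w l].

Lemma incr_upd n (w : state n) k : incr w k = upd w k (w k + 1).
Proof. apply/ffunP => l; rewrite !ffunE; have [->|ne] := eqVneq l k; by rewrite ?addr0. Qed.

Lemma upd_id n (w : state n) k : upd w k (w k) = w.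
Proof. apply/ffunP => l; rewrite !ffunE; by have [->|ne] := eqVneq l k. Qed.

Lemma upd_upd n (w : state n) k a b : upd (upd w k a) k b = upd w k b.
Proof. apply/ffunP => l; rewrite !ffunE; by case: (l == k). Qed.

Lemma updE n (w : state n) k a l : upd w k a l = if l == k then a else w l.
Proof. by rewrite ffunE. Qed.

Lemma inbox_upd n lo hi (w : state n) k a :
  inbox lo hi w -> lo k <= a <= hi k -> inbox lo hi (upd w k a).
Proof. move=> Hw Ha l; rewrite updE; by have [->|ne] := eqVneq l k. Qed.

Lemma ex_max_nat (P : nat -> Prop) b m0 : P m0 -> (forall m, P m -> (m <= b)%N) ->
  exists m, P m /\ forall m', P m' -> (m' <= m)%N.
Proof.
move=> P0 Hb; apply: NNPP => Hno.
have Hk : forall k, exists m, P m /\ (k <= m)%N.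
  elim=> [|k [m [Pm km]]]; first by exists m0.
  apply: NNPP => Hn; apply: Hno; exists m; split=> // m' Pm'.
  case: (leqP m' m) => // lt; exfalso; apply: Hn; exists m'; split=> //; lia.
have [m [Pm le]] := Hk b.+1; have := Hb _ Pm; lia.
Qed.

Lemma ex_min_nat (P : nat -> Prop) m0 : P m0 ->
  exists m, P m /\ forall m', P m' -> (m <= m')%N.
Proof.
elim/ltn_ind: m0 => m0 IH P0.
case: (classic (exists m', P m' /\ (m' < m0)%N)) => [[m' [Pm' lt]]|Hn].
  exact: IH lt Pm'.
exists m0; split=> // m' Pm'; case: (leqP m0 m') => // lt; exfalso; apply: Hn; by exists m'.
Qed.

Section Main.
Variables (n : nat) (G H : sgraph n).
Hypothesis HsubG : H \subset G.
Hypothesis no_sink_to_source : forall j i s, ((j, i), s) \in G ->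
      ~~ (is_sink H j && is_source H i).
Hypothesis no_arc_to_isolated : forall j i s, ((j, i), s) \in G -> ~~ is_isolated H i.
Variables (loY hiY : 'I_n -> int) (h : state n -> state n).
Hypothesis h_on_H : fds_on loY hiY h H.
Hypothesis h_db : degree_bounded loY hiY h.
Variables (xi : state n).
Hypothesis xiY : inbox loY hiY xi.

Local Notation inY := (inbox loY hiY).

Lemma loY_hiY k : loY k <= hiY k.
Proof. by case: h_on_H => [[]]. Qed.

Lemma hY x : inY x -> inY (h x).
Proof. by case: h_on_H => [[_]] => H1 _; apply: H1. Qed.

Lemma H_arc j i s : ((j,i),s) \in H <-> has_arc loY hiY h j i s.
Proof. by case: h_on_H => _; apply. Qed.

Lemma HG e : e \in H -> e \in G.
Proof. by move=> He; apply: (subsetP HsubG). Qed.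

Lemma mono_step j i (w : state n) a : ((j,i),false) \notin H -> inY w ->
  loY j <= a -> a < hiY j -> h (upd w j a) i <= h (upd w j (a+1)) i.
Proof.
move=> nH Hw la ah; rewrite leNgt; apply/negP => lt; move/negP: nH; apply; apply/H_arc.
exists (upd w j a); split.
- apply: inbox_upd => //; rewrite la /=; exact: ltW.
- by rewrite updE eqxx.
- by rewrite incr_upd updE eqxx upd_upd subr_lt0.
Qed.

Lemma anti_step j i (w : state n) a : ((j,i),true) \notin H -> inY w ->
  loY j <= a -> a < hiY j -> h (upd w j (a+1)) i <= h (upd w j a) i.
Proof.
move=> nH Hw la ah; rewrite leNgt; apply/negP => lt; move/negP: nH; apply; apply/H_arc.
exists (upd w j a); split.
- apply: inbox_upd => //; rewrite la /=; exact: ltW.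
- by rewrite updE eqxx.
- by rewrite incr_upd updE eqxx upd_upd subr_gt0.
Qed.

Lemma mono j i (w : state n) a b : ((j,i),false) \notin H -> inY w ->
  loY j <= a -> a <= b -> b <= hiY j -> h (upd w j a) i <= h (upd w j b) i.
Proof.
move=> nH Hw la ab bh.
have [m Em] : exists m : nat, b = a + m%:Z by exists (absz (b - a)); lia.
subst b; clear ab; move: bh; elim: m => [|m IH] bh; first by rewrite addr0.
apply: le_trans (IH _) _; first lia.
have -> : a + m.+1%:Z = (a + m%:Z) + 1 by lia.
apply: mono_step => //; lia.
Qed.

Lemma anti j i (w : state n) a b : ((j,i),true) \notin H -> inY w ->
  loY j <= a -> a <= b -> b <= hiY j -> h (upd w j b) i <= h (upd w j a) i.
Proof.
move=> nH Hw la ab bh.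
have [m Em] : exists m : nat, b = a + m%:Z by exists (absz (b - a)); lia.
subst b; clear ab; move: bh; elim: m => [|m IH] bh; first by rewrite addr0.
apply: le_trans _ (IH _); last lia.
have -> : a + m.+1%:Z = (a + m%:Z) + 1 by lia.
apply: anti_step => //; lia.
Qed.

Lemma const1 j i (w : state n) a : ((j,i),true) \notin H -> ((j,i),false) \notin H ->
  inY w -> loY j <= a <= hiY j -> h (upd w j a) i = h w i.
Proof.
move=> n1 n2 Hw /andP[la ah]; have := Hw j => /andP[lw wh].
transitivity (h (upd w j (w j)) i); last by rewrite upd_id.
case: (lerP a (w j)) => c; apply/le_anti/andP; split.
- exact: mono.
- exact: anti.
- apply: anti => //; exact: ltW.
- apply: mono => //; exact: ltW.
Qed.

Definition innb i k := [exists s, ((k,i),s) \in H].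

Lemma agree_aux i (y : state n) m : forall x, inY x -> inY y ->
  #|[set k | x k != y k]| = m ->
  (forall k, innb i k -> x k = y k) -> h x i = h y i.
Proof.
elim: m => [|m IH] x Hx Hy Hc Hag.
  have -> // : x = y; apply/ffunP => k; apply/eqP; apply: negbNE; apply/negP => ne.
  by move/eqP: Hc; rewrite cards_eq0 => /eqP/setP/(_ k); rewrite !inE ne.
have : (0 < #|[set k | x k != y k]|)%N by rewrite Hc.
rewrite card_gt0 => /set0Pn [k]; rewrite inE => nek.
have nk : ~~ innb i k by apply/negP => /Hag; apply/eqP.
have n1 : ((k,i),true) \notin H by apply/negP => hh; move/negP: nk; apply; apply/existsP; exists true.
have n2 : ((k,i),false) \notin H by apply/negP => hh; move/negP: nk; apply; apply/existsP; exists false.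
rewrite -(const1 (a := y k) n1 n2 Hx (Hy k)).
apply: IH.
- exact: inbox_upd.
- done.
- apply/eqP; rewrite -eqSS -Hc; apply/eqP.
  rewrite [in RHS](cardsD1 k) inE nek /= add1n; congr (_.+1); apply: eq_card => l; rewrite !inE updE.
  by case: (eqVneq l k) => [->|]; rewrite ?eqxx.
- by move=> l /Hag; rewrite updE; case: eqP => // ->.
Qed.

Lemma agree i x y : inY x -> inY y -> (forall k, innb i k -> x k = y k) -> h x i = h y i.
Proof. move=> Hx Hy; exact: agree_aux. Qed.


Variables (pmx pmn : 'I_n -> state n).
Hypothesis pmxY : forall i, inY (pmx i).
Hypothesis pmnY : forall i, inY (pmn i).
Hypothesis pmxM : forall i z, inY z -> h z i <= h (pmx i) i.
Hypothesis pmnM : forall i z, inY z -> h (pmn i) i <= h z i.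

Definition Bs := [set i | is_sink H i && ~~ is_sink G i].
Definition As := [set i | is_source H i && ~~ is_source G i].
Definition New := G :\: H.
Definition nlo k := if k \in Bs then xi k else loY k.
Definition nhi k := if k \in Bs then xi k else hiY k.
Definition cA i := h xi i < hiY i.
Definition up (e : 'I_n * 'I_n * bool) : bool :=
  if e.1.1 \in Bs then xi e.1.1 == loY e.1.1
  else if e.1.2 \in As then e.2 == cA e.1.2 else true.
Definition eff e := e.2 == up e.
Definition key (e : 'I_n * 'I_n * bool) : nat := (~~ eff e) * (2*n) + (2 * e.1.2 + e.2).
Definition Dset j d := [set e in New | (e.1.1 == j) && (up e == d)].
Definition rk e := #|[set e' in Dset e.1.1 (up e) | (key e' < key e)%N]|.+1.
Definition loX k := nlo k - (#|Dset k false|)%:Z.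
Definition hiX k := nhi k + (#|Dset k true|)%:Z.
Definition clamp k (v : int) := if v < nlo k then nlo k else if nhi k < v then nhi k else v.
Definition pi (x : state n) : state n := [ffun k => clamp k (x k)].
Definition act (x : state n) e := (e \in New) &&
  (if up e then (rk e)%:Z <= x e.1.1 - nhi e.1.1 else (rk e)%:Z <= nlo e.1.1 - x e.1.1).
Definition mx i := if i \in As then hiY i else h (pmx i) i.
Definition mn i := if i \in As then loY i else h (pmn i) i.
Definition actS x i := [exists js : 'I_n * bool, act x ((js.1,i),js.2)].
Definition negS x i := [exists js : 'I_n * bool, act x ((js.1,i),js.2) && ~~ eff ((js.1,i),js.2)].
Definition f (x : state n) : state n :=
  [ffun i => if actS x i then (if negS x i then mn i else mx i) else h (pi x) i].

Lemma B_sink k : k \in Bs -> is_sink H k.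
Proof. by rewrite inE => /andP[]. Qed.

Lemma B_new k : k \in Bs -> exists i s, ((k,i),s) \in New.
Proof.
rewrite inE => /andP[sH /sinkP nsG]; apply: NNPP => Hn; apply: nsG => i s.
apply/negP => Hin; apply: Hn; exists i, s; rewrite inE Hin andbT.
by move/sinkP: sH => ->.
Qed.

Lemma notB_of_Harc j i s : ((j,i),s) \in H -> j \notin Bs.
Proof. by move=> Hin; apply/negP => /B_sink /sinkP /(_ i s); rewrite Hin. Qed.

Lemma notA_of_Harc j i s : ((j,i),s) \in H -> i \notin As.
Proof. by move=> Hin; rewrite inE; apply/negP => /andP[/sourceP /(_ j s)]; rewrite Hin. Qed.

Lemma notB_of_A j i s : ((j,i),s) \in G -> i \in As -> j \notin Bs.
Proof.
move=> Hin iA; apply/negP => jB; move: (no_sink_to_source Hin).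
by rewrite (B_sink jB); move: iA; rewrite inE => /andP[-> _].
Qed.

Lemma new_notA_notsrcH j i s : ((j,i),s) \in G -> i \notin As -> ~~ is_source H i.
Proof.
move=> Hin; rewrite inE negb_and negbK => /orP[//|sG].
by move/sourceP: sG => /(_ j s); rewrite Hin.
Qed.

Lemma B_width k : k \in Bs -> hiY k - loY k <= 1.
Proof.
move=> kB; have := h_db (proj2 h_on_H) k; move/sinkP: (B_sink kB) => sk.
have -> : outdeg H k = 0%N by apply/eqP/sinkP.
by case: ifP => _ E; lia.
Qed.

Lemma nlo_bounds k : [/\ loY k <= nlo k, nlo k <= nhi k & nhi k <= hiY k].
Proof.
rewrite /nlo /nhi; case: ifP => _; last by split=> //; exact: loY_hiY.
by have := xiY k => /andP[a b]; split.
Qed.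

Lemma Dset_B k d : k \in Bs -> d != (xi k == loY k) -> Dset k d = set0.
Proof.
move=> kB nd; apply/setP => e; rewrite !inE; apply/negP => /andP[_ /andP[/eqP Ek /eqP Eu]].
by move: nd; rewrite -Eu /up Ek kB eqxx.
Qed.

Lemma Dset_B_ne k : k \in Bs -> (0 < #|Dset k (xi k == loY k)|)%N.
Proof.
move=> kB; have [i [s Hin]] := B_new kB; rewrite card_gt0; apply/set0Pn; exists ((k,i),s).
by rewrite !inE /= eqxx /up /= kB eqxx -(andbT (_ \in G)) -!andbA; move: Hin; rewrite inE => /andP[-> ->].
Qed.

Lemma XY k : loX k <= loY k /\ hiY k <= hiX k.
Proof.
rewrite /loX /hiX /nlo /nhi; case: ifP => kB; last by split; lia.
have := xiY k => /andP[a b]; have w := B_width kB.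
have ne := Dset_B_ne kB.
case: (eqVneq (xi k) (loY k)) => E.
- rewrite (Dset_B kB (d := false)) ?E ?eqxx // cards0; move: ne; rewrite E eqxx; lia.
- rewrite (Dset_B kB (d := true)) ?(negbTE E) // cards0; move: ne; rewrite (negbTE E); lia.
Qed.

Lemma loX_hiX k : loX k <= hiX k.
Proof. have [a b] := XY k; have := loY_hiY k; lia. Qed.

Lemma inY_inX x : inY x -> inbox loX hiX x.
Proof. move=> Hx k; have [a b] := XY k; have := Hx k; lia. Qed.

Lemma key_inj e e' : e.1.1 = e'.1.1 -> key e = key e' -> e = e'.
Proof.
case: e => [[j i] s]; case: e' => [[j' i'] s'] /= <-; rewrite /key /=.
have li := ltn_ord i; have li' := ltn_ord i'.
case: (~~ eff _); case: (~~ eff _); case: s; case: s'; rewrite /= => E;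
  try (have : i = i' :> nat by lia); try lia;
  by move/val_inj => ->.
Qed.

Lemma rk_lt e e' : e' \in Dset e.1.1 (up e) -> (key e' < key e)%N -> (rk e' < rk e)%N.
Proof.
move=> He' lt; rewrite /rk ltnS; apply: proper_card.
move: He'; rewrite !inE => /andP[Ne /andP[/eqP E1 /eqP E2]].
rewrite E1 E2; apply/properP; split.
- apply/subsetP => e''; rewrite !inE => /andP[/andP[-> ->] lt2] /=; exact: ltn_trans lt2 lt.
- exists e'; rewrite !inE ?ltnn; last by rewrite andbF.
  by rewrite Ne E1 E2 !eqxx lt.
Qed.

Lemma rk_inj e e' : e \in New -> e' \in New -> e.1.1 = e'.1.1 -> up e = up e' ->
  rk e = rk e' -> e = e'.
Proof.
move=> Ne Ne' E1 E2 Er.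
have D1 : e' \in Dset e.1.1 (up e) by rewrite inE Ne' E1 E2 !eqxx.
have D2 : e \in Dset e'.1.1 (up e') by rewrite inE Ne E1 E2 !eqxx.
case: (ltngtP (key e') (key e)) => c.
- by have := rk_lt D1 c; rewrite Er ltnn.
- by have := rk_lt D2 c; rewrite Er ltnn.
- by apply: key_inj.
Qed.

Lemma rk_le e : e \in New -> (rk e <= #|Dset e.1.1 (up e)|)%N.
Proof.
move=> Ne; rewrite /rk; apply: proper_card; apply/properP; split.
- by apply/subsetP => e'; rewrite inE => /andP[].
- exists e; rewrite !inE ?ltnn ?andbF // !eqxx !andbT; by move: Ne; rewrite /New inE.
Qed.


Lemma A_wide i : i \in As -> loY i < hiY i.
Proof.
rewrite inE => /andP[sH nsG].
have [j [s Hj]] : exists j s, ((j,i),s) \in G.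
  apply: NNPP => Hn; move/sourceP: nsG; apply => j s; apply/negP => Hin; apply: Hn; by exists j, s.
move: (no_arc_to_isolated Hj); rewrite /is_isolated sH /= => /sinkP nsk.
have [k [s' Hk]] : exists k s', ((i,k),s') \in H.
  apply: NNPP => Hn; apply: nsk => k s'; apply/negP => Hin; apply: Hn; by exists k, s'.
have [x [Hx lt _]] := (H_arc _ _ _).1 Hk.
have := Hx i; lia.
Qed.

Lemma mn_mx i z : inY z -> mn i <= h z i <= mx i.
Proof.
move=> Hz; rewrite /mn /mx; case: ifP => _; first exact: hY.
by rewrite pmnM ?pmxM.
Qed.

Lemma mnmxY i : loY i <= mn i /\ mx i <= hiY i.
Proof.
rewrite /mn /mx; case: ifP => _; first by [].
by have := hY (pmnY i) i; have := hY (pmxY i) i; lia.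
Qed.

Lemma inY_neutral (x : state n) k : inY x -> k \notin Bs -> nlo k <= x k <= nhi k.
Proof. by move=> Hx kB; rewrite /nlo /nhi (negbTE kB); apply: Hx. Qed.

Lemma clamp_b k v : nlo k <= clamp k v <= nhi k.
Proof.
rewrite /clamp; have [a b c] := nlo_bounds k.
case: (ltP v (nlo k)) => c1; [|case: (ltP (nhi k) v) => c2]; apply/andP; split => //; lia.
Qed.

Lemma clamp_id k v : nlo k <= v <= nhi k -> clamp k v = v.
Proof.
move=> /andP[a b]; rewrite /clamp.
case: (ltP v (nlo k)) => c1; [|case: (ltP (nhi k) v) => c2]; lia.
Qed.

Lemma pi_inY x : inY (pi x).
Proof.
move=> k; rewrite ffunE; have [a b c] := nlo_bounds k; have := clamp_b k (x k).
move=> /andP[d e]; apply/andP; split; lia.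
Qed.

Lemma pi_notB x k : inY x -> k \notin Bs -> pi x k = x k.
Proof.
move=> Hx kB; rewrite ffunE clamp_id //; exact: inY_neutral.
Qed.

Lemma pi_B x k : k \in Bs -> pi x k = xi k.
Proof. move=> kB; rewrite ffunE; have := clamp_b k (x k); rewrite /nlo /nhi kB; lia. Qed.

Lemma pi_id x : inY x -> (forall k, k \in Bs -> x k = xi k) -> pi x = x.
Proof.
move=> Hx HB; apply/ffunP => k; case: (boolP (k \in Bs)) => kB.
- by rewrite pi_B // HB.
- exact: pi_notB.
Qed.

Lemma rk_ge1 e : (1 <= rk e)%N.
Proof. by []. Qed.

Lemma act_neutral (x : state n) (e : 'I_n * 'I_n * bool) : nlo e.1.1 <= x e.1.1 <= nhi e.1.1 -> act x e = false.
Proof.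
move=> /andP[a b]; have r1 := rk_ge1 e; rewrite /act.
case: (up e); apply/negbTE; rewrite negb_and; apply/orP; right; rewrite -ltNge;
move: a b r1; case: e => [[j i] s] /=; lia.
Qed.



Lemma New_G e : e \in New -> e \in G.
Proof. by rewrite inE => /andP[]. Qed.

Lemma act_New x e : act x e -> e \in New.
Proof. by case/andP. Qed.

Lemma fY x : inY (f x).
Proof.
move=> i; rewrite ffunE; have [a b] := mnmxY i; have := mn_mx i (pi_inY x).
case: ifP => _; [case: ifP => _|]; lia.
Qed.

Lemma nact_Y x i : inY x -> (forall k, k \in Bs -> x k = xi k) -> actS x i = false.
Proof.
move=> Hx HB; apply/negbTE/negP => /existsP [[j s]] /= A1.
suff : act x ((j,i),s) = false by rewrite A1.
apply: act_neutral => /=; case: (boolP (j \in Bs)) => jB.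
- by rewrite /nlo /nhi jB HB // lexx.
- exact: inY_neutral.
Qed.

Lemma part3 x : inY x -> (forall k, k \in Bs -> x k = xi k) -> f x = h x.
Proof.
move=> Hx HB; apply/ffunP => i; rewrite ffunE nact_Y // pi_id //.
Qed.

Lemma part4 x i : inY x -> (forall j s, ((j,i),s) \in G -> j \notin Bs) -> f x i = h x i.
Proof.
move=> Hx HB; rewrite ffunE.
have -> : actS x i = false.
  apply/negbTE/negP => /existsP [[j s]] /= A1.
  have jB := HB _ _ (New_G (act_New A1)).
  suff : act x ((j,i),s) = false by rewrite A1.
  apply: act_neutral; exact: inY_neutral.
apply: agree => //; first exact: pi_inY.
move=> k /existsP [s Hk]; apply: pi_notB => //; exact: notB_of_Harc Hk.
Qed.

Lemma part2 x i : i \notin As -> exists y, inY y /\ f x i = h y i.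
Proof.
move=> iA; rewrite ffunE /mn /mx (negbTE iA).
case: ifP => _; [case: ifP => _|].
- by exists (pmn i); split.
- by exists (pmx i); split.
- by exists (pi x); split => //; exact: pi_inY.
Qed.


Lemma act_ext (x x' : state n) e : x e.1.1 = x' e.1.1 -> act x e = act x' e.
Proof. by rewrite /act => ->. Qed.

Lemma incr_ne (x : state n) j k : k != j -> incr x j k = x k.
Proof. by move=> ne; rewrite ffunE (negbTE ne) addr0. Qed.

Lemma incr_eq (x : state n) j : incr x j j = x j + 1.
Proof. by rewrite ffunE eqxx. Qed.

Lemma changed_hi (x : state n) j e : nhi j <= x j -> e.1.1 = j ->
  act x e != act (incr x j) e ->
  [/\ e \in New, up e, act x e = false, act (incr x j) e &
      (rk e)%:Z = x j + 1 - nhi j].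
Proof.
move=> le E; have r1 := rk_ge1 e; rewrite /act E incr_eq; have [a b c] := nlo_bounds j.
case: (boolP (e \in New)) => //= Ne; case: (up e) => /=.
- case: leP => l1; case: leP => l2 //= _; split => //; lia.
- case: leP => l1; case: leP => l2 //= _; lia.
Qed.

Lemma changed_lo (x : state n) j e : x j < nlo j -> e.1.1 = j ->
  act x e != act (incr x j) e ->
  [/\ e \in New, ~~ up e, act x e, act (incr x j) e = false &
      (rk e)%:Z = nlo j - x j].
Proof.
move=> le E; have r1 := rk_ge1 e; rewrite /act E incr_eq; have [a b c] := nlo_bounds j.
case: (boolP (e \in New)) => //= Ne; case: (up e) => /=.
- case: leP => l1; case: leP => l2 //= _; lia.
- case: leP => l1; case: leP => l2 //= _; split => //; lia.
Qed.

Definition Rs (x : state n) i j s0 :=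
  [exists js : 'I_n * bool, (js != (j,s0)) && act x ((js.1,i),js.2)].
Definition RNs (x : state n) i j s0 :=
  [exists js : 'I_n * bool, (js != (j,s0)) && (act x ((js.1,i),js.2) && ~~ eff ((js.1,i),js.2))].

Lemma actS_dec x i j s0 : actS x i = act x ((j,i),s0) || Rs x i j s0.
Proof.
apply/idP/idP.
- move/existsP => [[k s] /= A1]; case: (eqVneq (k,s) (j,s0)) => [[Ek Es]|ne].
    by subst; rewrite A1.
  by apply/orP; right; apply/existsP; exists (k,s); rewrite ne.
- case/orP => [A1|/existsP [[k s] /andP[_ A1]]]; apply/existsP; first by exists (j,s0).
  by exists (k,s).
Qed.

Lemma negS_dec x i j s0 : negS x i = (act x ((j,i),s0) && ~~ eff ((j,i),s0)) || RNs x i j s0.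
Proof.
apply/idP/idP.
- move/existsP => [[k s] /= A1]; case: (eqVneq (k,s) (j,s0)) => [[Ek Es]|ne].
    by subst; rewrite A1.
  by apply/orP; right; apply/existsP; exists (k,s); rewrite ne.
- case/orP => [A1|/existsP [[k s] /andP[_ A1]]]; apply/existsP; first by exists (j,s0).
  by exists (k,s).
Qed.

Lemma RN_R x i j s0 : RNs x i j s0 -> Rs x i j s0.
Proof.
by move/existsP => [js /andP[ne /andP[A1 _]]]; apply/existsP; exists js; rewrite ne.
Qed.

Lemma f_dec x i j s0 : f x i =
  if act x ((j,i),s0) || Rs x i j s0 then
    (if (act x ((j,i),s0) && ~~ eff ((j,i),s0)) || RNs x i j s0 then mn i else mx i)
  else h (pi x) i.
Proof. by rewrite ffunE (actS_dec x i j s0) (negS_dec x i j s0). Qed.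

Lemma mn_le_mx i : mn i <= mx i.
Proof. have := mn_mx i xiY; lia. Qed.

Lemma F_step x y i j s0 :
  h (pi x) i = h (pi y) i -> Rs x i j s0 = Rs y i j s0 -> RNs x i j s0 = RNs y i j s0 ->
  act x ((j,i),s0) != act y ((j,i),s0) ->
  act y ((j,i),s0) = (eff ((j,i),s0) == s0) ->
  if s0 then f x i <= f y i else f y i <= f x i.
Proof.
move=> Eh ER ERN ne Ea; rewrite (f_dec x i j s0) (f_dec y i j s0) -Eh -ER -ERN.
have := mn_mx i (pi_inY x); have := mn_le_mx i.
have RR : RNs x i j s0 ==> Rs x i j s0 by apply/implyP/RN_R.
clear ER ERN Eh; move: ne Ea RR.
set a0 := act x _; set a1 := act y _; set ef := eff _; set r := Rs x i j s0; set rn := RNs x i j s0.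
clearbody a0 a1 ef r rn.
case: a0; case: a1; case: ef; case: s0; case: r; case: rn => //=; lia.
Qed.


Lemma clamp_lo k v : v <= nlo k -> clamp k v = nlo k.
Proof. move=> le; rewrite /clamp; have [a b c] := nlo_bounds k.
case: (ltP v (nlo k)) => c1 //; case: (ltP (nhi k) v) => c2; lia. Qed.

Lemma clamp_hi k v : nhi k <= v -> clamp k v = nhi k.
Proof. move=> le; rewrite /clamp; have [a b c] := nlo_bounds k.
case: (ltP v (nlo k)) => c1; [lia|]; case: (ltP (nhi k) v) => c2 //; lia. Qed.

Lemma unchanged_other (x : state n) j (e : 'I_n * 'I_n * bool) :
  e.1.1 != j -> act x e = act (incr x j) e.
Proof. by move=> ne; apply: act_ext; rewrite incr_ne. Qed.

Lemma sound_core (x : state n) j i s : pi (incr x j) = pi x ->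
  (forall s', act x ((j,i),s') != act (incr x j) ((j,i),s') ->
     ((j,i),s') \in New /\ act (incr x j) ((j,i),s') = (eff ((j,i),s') == s')) ->
  (forall s' s'', act x ((j,i),s') != act (incr x j) ((j,i),s') ->
     act x ((j,i),s'') != act (incr x j) ((j,i),s'') -> s' = s'') ->
  (if s then 0 < f (incr x j) i - f x i else f (incr x j) i - f x i < 0) ->
  ((j,i),s) \in G.
Proof.
move=> Epi Hch Huniq Hs.
case: (boolP [exists s', act x ((j,i),s') != act (incr x j) ((j,i),s')]).
- case/existsP => s0 ch; have [Ne Ea] := Hch _ ch.
  have Hsame : forall js : 'I_n * bool, js != (j,s0) ->
      act x ((js.1,i),js.2) = act (incr x j) ((js.1,i),js.2).
    move=> [k s'] /= ne; case: (eqVneq k j) => [Ek|nk]; last exact: unchanged_other.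
    subst k; apply/eqP; apply: negbNE; apply/negP => ch'.
    by move: ne; rewrite (Huniq _ _ ch' ch) eqxx.
  have ER : Rs x i j s0 = Rs (incr x j) i j s0.
    apply: eq_existsb => js; case: (eqVneq js (j,s0)) => //= ne; exact: Hsame.
  have ERN : RNs x i j s0 = RNs (incr x j) i j s0.
    apply: eq_existsb => js; case: (eqVneq js (j,s0)) => //= ne; by rewrite Hsame.
  have := F_step (congr1 (fun z => h z i) (esym Epi)) ER ERN ch Ea.
  move=> F; have Es : s = s0 by destruct s, s0 => //=; lia.
  by subst s; exact: New_G.
- rewrite negb_exists => /forallP Hall; exfalso.
  have Hsame : forall js : 'I_n * bool,
      act x ((js.1,i),js.2) = act (incr x j) ((js.1,i),js.2).
    move=> [k s'] /=; case: (eqVneq k j) => [Ek|nk]; last exact: unchanged_other.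
    by subst k; apply/eqP; apply: negbNE; apply: Hall.
  have : f (incr x j) i = f x i.
    have EA : actS x i = actS (incr x j) i by apply: eq_existsb => js; rewrite Hsame.
    have EN : negS x i = negS (incr x j) i by apply: eq_existsb => js; rewrite Hsame.
    by rewrite !ffunE Epi EA EN.
  by move: Hs => /[swap] ->; case: s; rewrite subrr.
Qed.

Lemma sound j i s : has_arc loX hiX f j i s -> ((j,i),s) \in G.
Proof.
move=> [x [Hx ltx Hs]].
have [a b c] := nlo_bounds j.
case: (ltP (x j) (nlo j)) => c1; [| case: (ltP (x j) (nhi j)) => c2].
- (* below: down arcs deactivate *)
  apply: (sound_core (x := x)) => //.
  + apply/ffunP => k; rewrite !ffunE; case: (eqVneq k j) => [->|nk].
      rewrite /= !clamp_lo //; lia.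
    by rewrite addr0.
  + move=> s' ch; have [Ne nu _ A2 _] := @changed_lo x j ((j,i),s') c1 (erefl j) ch; split => //.
    by rewrite A2 /eff (negbTE nu); destruct s'.
  + move=> s' s'' ch ch'.
    have [Ne nu _ _ R1] := @changed_lo x j ((j,i),s') c1 (erefl j) ch.
    have [Ne' nu' _ _ R2] := @changed_lo x j ((j,i),s'') c1 (erefl j) ch'.
    have := @rk_inj ((j,i),s') ((j,i),s'') Ne Ne' (erefl _).
    rewrite (negbTE nu) (negbTE nu') => /(_ (erefl _)).
    have -> : rk ((j,i),s') = rk ((j,i),s'') by apply/eqP; rewrite -eqz_nat R1 R2.
    by move=> /(_ (erefl _)) [].
- (* inside: h step *)
  have Hsame : forall e, act x e = act (incr x j) e.
    move=> e; case: (eqVneq e.1.1 j) => [E|ne]; last exact: unchanged_other.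
    rewrite !act_neutral // E ?incr_eq; apply/andP; split; lia.
  have EA : actS x i = actS (incr x j) i by apply: eq_existsb => js; rewrite Hsame.
  have Epi : pi (incr x j) = incr (pi x) j.
    apply/ffunP => k; rewrite !ffunE; case: (eqVneq k j) => [->|nk].
      rewrite /= !clamp_id //; apply/andP; split; lia.
    by rewrite !addr0.
  case: (boolP (actS x i)) => aS.
    exfalso; move: Hs; rewrite !ffunE -EA aS.
    have -> : negS x i = negS (incr x j) i by apply: eq_existsb => js; rewrite Hsame.
    by case: s; rewrite subrr.
  apply: HG; apply/H_arc; exists (pi x); split.
  + exact: pi_inY.
  + rewrite ffunE clamp_id; first lia. apply/andP; split; lia.
  + by move: Hs; rewrite !ffunE -EA (negbTE aS) -Epi.
- (* above: up arcs activate *)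
  apply: (sound_core (x := x)) => //.
  + apply/ffunP => k; rewrite !ffunE; case: (eqVneq k j) => [->|nk].
      rewrite /= !clamp_hi //; lia.
    by rewrite addr0.
  + move=> s' ch; have [Ne nu _ A2 _] := @changed_hi x j ((j,i),s') c2 (erefl j) ch; split => //.
    by rewrite A2 /eff nu; destruct s'.
  + move=> s' s'' ch ch'.
    have [Ne nu _ _ R1] := @changed_hi x j ((j,i),s') c2 (erefl j) ch.
    have [Ne' nu' _ _ R2] := @changed_hi x j ((j,i),s'') c2 (erefl j) ch'.
    have := @rk_inj ((j,i),s') ((j,i),s'') Ne Ne' (erefl _).
    rewrite nu nu' => /(_ (erefl _)).
    have -> : rk ((j,i),s') = rk ((j,i),s'') by apply/eqP; rewrite -eqz_nat R1 R2.
    by move=> /(_ (erefl _)) [].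
Qed.


Lemma key_lt2n e : eff e -> (key e < 2 * n)%N.
Proof.
case: e => [[j i] s] /= ef; rewrite /key ef /=; have := ltn_ord i; destruct s => /=; lia.
Qed.

Lemma key_ge2n e : ~~ eff e -> (2 * n <= key e)%N.
Proof. case: e => [[j i] s] /= ef; rewrite /key ef /=; lia. Qed.

Lemma pair_eff e0 e1 : e0 \in New -> e1 \in New -> e0.1 = e1.1 -> e0 != e1 ->
  up e0 = up e1 -> (rk e1 < rk e0)%N -> eff e1 && ~~ eff e0.
Proof.
case: e0 => [[j i] s]; case: e1 => [[j' i'] s'] N0 N1 /= [Ej Ei] ne Eu lt; subst j' i'.
have Hk : (key ((j,i),s') < key ((j,i),s))%N.
  case: (ltngtP (key ((j,i),s')) (key ((j,i),s))) => // c.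
  - have D : ((j,i),s) \in Dset j (up ((j,i),s')) by rewrite inE N0 -Eu !eqxx.
    by have := ltn_trans lt (@rk_lt ((j,i),s') ((j,i),s) D c); rewrite ltnn.
  - by move: ne; rewrite (@key_inj ((j,i),s) ((j,i),s') (erefl _) (esym c)) eqxx.
have Eeff : eff ((j,i),s') = ~~ eff ((j,i),s).
  rewrite /eff /= -Eu; have : s' != s by apply: contra ne => /eqP ->.
  by case: (up _); destruct s, s'.
case: (boolP (eff ((j,i),s))) => e0e; rewrite Eeff e0e //=.
have := key_lt2n e0e; have := @key_ge2n ((j,i),s'); rewrite Eeff e0e /= => /(_ isT) a b.
by have := leq_ltn_trans a (ltn_trans Hk b); rewrite ltnn.
Qed.

Lemma Rs_single (z : state n) i j s0 :
  (forall k, k != j -> nlo k <= z k <= nhi k) ->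
  Rs z i j s0 = act z ((j,i),~~s0) /\
  RNs z i j s0 = act z ((j,i),~~s0) && ~~ eff ((j,i),~~s0).
Proof.
move=> Hn; have ne : (j, ~~s0) != (j, s0) by rewrite xpair_eqE eqxx /=; destruct s0.
split; apply/idP/idP.
- move/existsP => [[k s] /andP[nek A1]]; case: (eqVneq k j) => [Ek|nk].
  + subst k; have Es : s = ~~ s0 by move: nek; rewrite xpair_eqE eqxx /=; destruct s, s0.
    subst s.
    exact: A1.
  + by rewrite act_neutral // in A1; exact: Hn.
- by move=> A1; apply/existsP; exists (j,~~s0); rewrite ne.
- move/existsP => [[k s] /andP[nek A1]]; case: (eqVneq k j) => [Ek|nk].
  + subst k; have Es : s = ~~ s0 by move: nek; rewrite xpair_eqE eqxx /=; destruct s, s0.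
    subst s.
    exact: A1.
  + by move: A1; rewrite act_neutral //; exact: Hn.
- by move=> A1; apply/existsP; exists (j,~~s0); rewrite ne.
Qed.


Lemma actE (x : state n) j i s : act x ((j,i),s) = (((j,i),s) \in New) &&
  (if up ((j,i),s) then (rk ((j,i),s))%:Z <= x j - nhi j else (rk ((j,i),s))%:Z <= nlo j - x j).
Proof. by []. Qed.

Lemma realize j i s0 q : ((j,i),s0) \in New -> inY q -> (forall k, k \in Bs -> q k = xi k) ->
  q j = (if up ((j,i),s0) then nhi j else nlo j) ->
  (if eff ((j,i),s0) then h q i < mx i else mn i < h q i) ->
  has_arc loX hiX f j i s0.
Proof.
move=> N0 Hq HqB Hqj Hw.
have t1 := rk_ge1 ((j,i),s0).
have tle : (rk ((j,i),s0) <= #|Dset j (up ((j,i),s0))|)%N by exact: rk_le N0.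
have [t Ht] : exists t, rk ((j,i),s0) = t by eexists.
rewrite Ht in t1 tle.
have [a b c] := nlo_bounds j.
have Hneu : forall k, k != j -> nlo k <= q k <= nhi k.
  move=> k _; case: (boolP (k \in Bs)) => kB; last exact: inY_neutral.
  by rewrite /nlo /nhi kB HqB // lexx.
have mm := mn_mx i Hq.
have ef0 : eff ((j,i),s0) = (s0 == up ((j,i),s0)) by [].
have [v Hv] : exists v, v = if up ((j,i),s0) then nhi j + t%:Z - 1 else nlo j - t%:Z by eexists.
have [x Hxd] : exists x, x = upd q j v by eexists.
have Exy : incr x j = upd q j (v + 1) by rewrite incr_upd Hxd upd_upd updE eqxx.
have xj : x j = v by rewrite Hxd updE eqxx.
have Hnx : forall k, k != j -> nlo k <= x k <= nhi k.
  by move=> k nk; rewrite Hxd updE (negbTE nk); exact: Hneu.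
have Hny : forall k, k != j -> nlo k <= incr x j k <= nhi k.
  by move=> k nk; rewrite Exy updE (negbTE nk); exact: Hneu.
have Epi : forall w, (if up ((j,i),s0) then nhi j <= w else w <= nlo j) -> pi (upd q j w) = q.
  move=> w Hwc; apply/ffunP => k; rewrite ffunE updE; case: (eqVneq k j) => [->|nk].
  - rewrite Hqj; move: Hwc; case: (up _) => Hwc; [exact: clamp_hi | exact: clamp_lo].
  - exact: clamp_id (Hneu k nk).
have Epx : pi x = q by rewrite Hxd; apply: Epi; rewrite Hv; case: (up _); clear - t1; lia.
have Epy : pi (incr x j) = q by rewrite Exy; apply: Epi; rewrite Hv; case: (up _); clear - t1; lia.
have A0x : act x ((j,i),s0) = ~~ up ((j,i),s0).
  rewrite actE N0 xj Hv Ht; case: (up _) => /=.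
  - by apply/negbTE; rewrite -ltNge; clear - t1; lia.
  - clear - t1; lia.
have A0y : act (incr x j) ((j,i),s0) = up ((j,i),s0).
  rewrite actE N0 Exy updE eqxx Hv Ht; case: (up _) => /=.
  - clear - t1; lia.
  - by apply/negbTE; rewrite -ltNge; clear - t1; lia.
have A1xy : act x ((j,i),~~s0) = act (incr x j) ((j,i),~~s0).
  apply/eqP; apply: negbNE; apply/negP => ch.
  have [N1 Eu1 Er] : [/\ ((j,i),~~s0) \in New, up ((j,i),~~s0) = up ((j,i),s0) &
                       rk ((j,i),~~s0) = rk ((j,i),s0)].
    case Eu: (up ((j,i),s0)) Hv => Hv.
    - have [N1 u1 _ _ R1] := @changed_hi x j ((j,i),~~s0) ltac:(rewrite xj Hv; clear - t1; lia) (erefl j) ch.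
      split => //; apply/eqP; rewrite -eqz_nat R1 xj Hv Ht; apply/eqP; clear - t1; lia.
    - have [N1 u1 _ _ R1] := @changed_lo x j ((j,i),~~s0) ltac:(rewrite xj Hv; clear - t1; lia) (erefl j) ch.
      split => //; first by apply/negbTE.
      apply/eqP; rewrite -eqz_nat R1 xj Hv Ht; apply/eqP; clear - t1; lia.
  have := @rk_inj ((j,i),~~s0) ((j,i),s0) N1 N0 (erefl _) Eu1 Er.
  by case; destruct s0.
have A1eff : act x ((j,i),~~s0) -> eff ((j,i),~~s0) && ~~ eff ((j,i),s0).
  move=> A1; have N1 := act_New A1.
  have ne : ((j,i),s0) != ((j,i),~~s0) by rewrite xpair_eqE eqxx /=; destruct s0.
  have [Eu1 lt] : up ((j,i),s0) = up ((j,i),~~s0) /\ (rk ((j,i),~~s0) < rk ((j,i),s0))%N.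
    case Eu: (up ((j,i),s0)) Hv => Hv.
    - move: A1; rewrite actE N1 xj Hv Ht; case: (up ((j,i),~~s0)) => H1.
      + split => //; move: H1; set r := rk _; clearbody r; clear - t1; lia.
      + exfalso; move: H1; set r := rk _; have := rk_ge1 ((j,i),~~s0); rewrite -/r; clearbody r; clear - t1 b; lia.
    - move: A1; rewrite A1xy actE N1 Exy updE eqxx Hv Ht; case: (up ((j,i),~~s0)) => H1.
      + exfalso; move: H1; set r := rk _; have := rk_ge1 ((j,i),~~s0); rewrite -/r; clearbody r; clear - t1 b; lia.
      + split => //; move: H1; set r := rk _; clearbody r; clear - t1; lia.
  exact: pair_eff N0 N1 (erefl _) ne Eu1 lt.
exists x; split.
- move=> k; rewrite Hxd updE; case: (eqVneq k j) => [->|nk]; last exact: inY_inX.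
  rewrite /loX /hiX Hv; move: tle; case: (up _) => tle; clear - t1 tle b; lia.
- rewrite xj /hiX Hv; move: tle; case: (up _) => tle; clear - t1 tle b; lia.
- rewrite (f_dec x i j s0) (f_dec (incr x j) i j s0) Epx Epy.
  have [R1 RN1] := Rs_single i s0 Hnx; have [R2 RN2] := Rs_single i s0 Hny.
  rewrite R1 RN1 R2 RN2 -A1xy A0x A0y.
  move: A1eff Hw mm (mn_le_mx i) ef0.
  set A1 := act x _; set u := up _; set ef := eff ((j,i),s0); set ef1 := eff ((j,i),~~s0).
  clearbody A1 u ef ef1.
  clear - t1; case: A1; case: u; case: ef; case: ef1; case: s0 => //=; lia.
Qed.


Definition norm (w : state n) : state n := [ffun k => if k \in Bs then xi k else w k].

Lemma norm_inY w : inY w -> inY (norm w).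
Proof. by move=> Hw k; rewrite ffunE; case: ifP. Qed.

Lemma norm_B w k : k \in Bs -> norm w k = xi k.
Proof. by move=> kB; rewrite ffunE kB. Qed.

Lemma norm_nB w k : k \notin Bs -> norm w k = w k.
Proof. by move=> kB; rewrite ffunE (negbTE kB). Qed.

Lemma h_norm w i : inY w -> h (norm w) i = h w i.
Proof.
move=> Hw; apply: agree => //; first exact: norm_inY.
move=> k /existsP [s Hk]; apply: norm_nB; exact: notB_of_Harc Hk.
Qed.

Lemma cY j : loY j <= (if up ((j,j),true) then nhi j else nlo j) <= hiY j.
Proof. by have [a b c] := nlo_bounds j; case: ifP => _; apply/andP; split; lia. Qed.

Lemma witness j i s0 : ((j,i),s0) \in New -> exists q, [/\ inY q,
  (forall k, k \in Bs -> q k = xi k),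
  q j = (if up ((j,i),s0) then nhi j else nlo j) &
  (if eff ((j,i),s0) then h q i < mx i else mn i < h q i)].
Proof.
move=> N0; have [a b c] := nlo_bounds j.
have cjY : loY j <= (if up ((j,i),s0) then nhi j else nlo j) <= hiY j.
  by case: ifP => _; apply/andP; split; lia.
have qB : forall w k, k \in Bs -> upd (norm w) j (if up ((j,i),s0) then nhi j else nlo j) k = xi k.
  move=> w k kB; rewrite updE; case: (eqVneq k j) => [Ek|nk]; last exact: norm_B.
  by subst k; rewrite /nhi /nlo kB; case: ifP.
have N0' : ((j,i),s0) \notin H by move: N0; rewrite inE => /andP[].
case: (boolP (((j,i),~~s0) \in H)) => Hb.
-
  have jB := notB_of_Harc Hb; have iA := notA_of_Harc Hb.
  have Eup : up ((j,i),s0) = true by rewrite /up /= (negbTE jB) (negbTE iA).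
  have [w [Hw wj Hs]] := (H_arc _ _ _).1 Hb.
  have nw := norm_inY Hw.
  have Hincr : h (incr (norm w) j) i = h (incr w j) i.
    rewrite -(h_norm i (w := incr w j)); last first.
      by rewrite incr_upd; apply: inbox_upd => //; have := Hw j; lia.
    congr (h _ i); apply/ffunP => k; rewrite !ffunE; case: ifP => // kB.
    have -> : (k == j) = false by apply/negbTE; apply: (contraTneq _ kB) => ->.
    by rewrite addr0.
  have Ewj : norm w j = w j by exact: norm_nB.
  exists (upd (norm w) j (hiY j)); split.
  + by apply: inbox_upd => //; rewrite lexx andbT loY_hiY.
  + by move=> k kB; have := qB w k kB; rewrite Eup /nhi (negbTE jB).
  + by rewrite updE eqxx Eup /nhi (negbTE jB).
  + rewrite /eff Eup /=; have mm2 := mn_mx i Hw.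
    have h1 := h_norm i Hw.
    have h2 : h (upd (norm w) j (w j + 1)) i = h (incr w j) i by rewrite -Hincr incr_upd Ewj.
    have wl := Hw j.
    move: Hs; destruct s0 => /= Hs.
    * have := @anti j i (norm w) (w j + 1) (hiY j) N0' nw.
      move=> /(_ ltac:(clear - wl; lia) ltac:(clear - wj; lia) (lexx _)).
      clear - h1 h2 Hs mm2; lia.
    * have := @mono j i (norm w) (w j + 1) (hiY j) N0' nw.
      move=> /(_ ltac:(clear - wl; lia) ltac:(clear - wj; lia) (lexx _)).
      clear - h1 h2 Hs mm2; lia.
-
  have noji : forall k, innb i k -> k != j.
    move=> k /existsP [s Hk]; apply/eqP => Ekj; subst k.
    by move: Hk; case: (eqVneq s s0) => [->|ns]; [rewrite (negbTE N0') | move/negbTE: ns => /eqP; destruct s, s0 => //= _; rewrite (negbTE Hb)].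
  have qagree : forall p, inY p -> h (upd (norm p) j (if up ((j,i),s0) then nhi j else nlo j)) i = h p i.
    move=> p Hp; apply: agree => //.
      by apply: inbox_upd => //; exact: norm_inY.
    move=> k Hk; rewrite updE (negbTE (noji k Hk)); apply: norm_nB.
    by case/existsP: Hk => s Hk; exact: notB_of_Harc Hk.
  case: (boolP (i \in As)) => iA.
  + have jB := notB_of_A (New_G N0) iA.
    exists (upd (norm xi) j (if up ((j,i),s0) then nhi j else nlo j)); split.
    * by apply: inbox_upd => //; exact: norm_inY.
    * exact: qB.
    * by rewrite updE eqxx.
    * rewrite qagree // /mx /mn iA.
      have Eeff : eff ((j,i),s0) = cA i by rewrite /eff /up /= (negbTE jB) iA; destruct s0; case: (cA i).
      rewrite Eeff /cA; case: ltP => // le; have := A_wide iA; have := hY xiY i; lia.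
  + have [k [s' Hk]] : exists k s', ((k,i),s') \in H.
      apply: NNPP => Hn; move/sourceP: (new_notA_notsrcH (New_G N0) iA); apply => k s'.
      by apply/negP => Hin; apply: Hn; exists k, s'.
    have [z [Hz zk Hs]] := (H_arc _ _ _).1 Hk.
    have Hz' : inY (incr z k) by rewrite incr_upd; apply: inbox_upd => //; have := Hz k; lia.
    have m1 := mn_mx i Hz; have m2 := mn_mx i Hz'.
    have mlt : mn i < mx i by move: Hs; clear - m1 m2; destruct s' => /= Hs; lia.
    exists (upd (norm (if eff ((j,i),s0) then pmn i else pmx i)) j (if up ((j,i),s0) then nhi j else nlo j)); split.
    * apply: inbox_upd => //; apply: norm_inY; case: ifP => _; [exact: pmnY | exact: pmxY].
    * exact: qB.
    * by rewrite updE eqxx.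
    * rewrite qagree; last by case: ifP => _; [exact: pmnY | exact: pmxY].
      move: mlt; rewrite /mn /mx (negbTE iA); by case: (eff ((j,i),s0)).
Qed.


Lemma complete j i s : ((j,i),s) \in G -> has_arc loX hiX f j i s.
Proof.
move=> HG0; case: (boolP (((j,i),s) \in H)) => HH.
- have jB := notB_of_Harc HH.
  have [z [Hz zj Hs]] := (H_arc _ _ _).1 HH.
  have Hz' : inY (incr z j) by rewrite incr_upd; apply: inbox_upd => //; have := Hz j; lia.
  have En : incr (norm z) j = norm (incr z j).
    apply/ffunP => k; rewrite !ffunE; case: ifP => // kB.
    have -> : (k == j) = false by apply/negbTE; apply: (contraTneq _ kB) => ->.
    by rewrite addr0.
  exists (norm z); split.
  + exact/inY_inX/norm_inY.
  + rewrite norm_nB //; have [_ hh] := XY j; lia.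
  + rewrite (part3 (norm_inY Hz)); last by move=> k kB; exact: norm_B.
    rewrite En (part3 (norm_inY Hz')); last by move=> k kB; exact: norm_B.
    by rewrite (h_norm i Hz) (h_norm i Hz').
- have N0 : ((j,i),s) \in New by rewrite inE HH HG0.
  have [q [Hq HqB Hqj Hw]] := witness N0.
  exact: realize N0 Hq HqB Hqj Hw.
Qed.

Lemma graphG : is_interaction_graph loX hiX f G.
Proof. move=> j i s; split; [exact: complete | exact: sound]. Qed.

Lemma outdeg_split j : outdeg G j = (outdeg H j + #|Dset j true| + #|Dset j false|)%N.
Proof.
rewrite /outdeg -(cardsID H [set e in G | e.1.1 == j]).
have -> : [set e in G | e.1.1 == j] :&: H = [set e in H | e.1.1 == j].
  apply/setP => e; rewrite !inE; case: (boolP (e \in H)) => He; rewrite ?andbF ?andbT //=.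
  by rewrite HG.
rewrite -addnA; congr (_ + _)%N.
have E1 : ([set e in G | e.1.1 == j] :\: H) :&: [set e | up e] = Dset j true.
  apply/setP => e; rewrite !inE; case: (up e); rewrite ?andbF ?andbT //=.
  by case: (e \in H); case: (e \in G); case: (e.1.1 == j).
have E2 : ([set e in G | e.1.1 == j] :\: H) :\: [set e | up e] = Dset j false.
  apply/setP => e; rewrite !inE; case: (up e); rewrite ?andbF ?andbT //=.
  by case: (e \in H); case: (e \in G); case: (e.1.1 == j).
by rewrite -(cardsID [set e | up e] ([set e in G | e.1.1 == j] :\: H)) E1 E2.
Qed.

Lemma indeg_le j : (indeg H j <= indeg G j)%N.
Proof.
apply: subset_leq_card; apply/subsetP => e; rewrite !inE => /andP[He ->]; by rewrite HG.
Qed.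

Lemma dbG : deg_bounded_wrt loX hiX G.
Proof.
move=> j; have od := outdeg_split j; have idl := indeg_le j.
have hb := h_db (proj2 h_on_H) j.
rewrite /loX /hiX.
move: od; set a := #|Dset j true|; set b := #|Dset j false| => od.
clearbody a b.
case: (boolP (j \in Bs)) => jB.
- have oH : outdeg H j = 0%N by apply/eqP; exact: B_sink.
  have oG : outdeg G j != 0%N by move: jB; rewrite inE => /andP[_].
  rewrite (negbTE oG) /= /nhi /nlo jB od oH; clear; lia.
- rewrite /nhi /nlo (negbTE jB).
  case: ifP => cG.
  + move/andP: cG => [/eqP oG iG].
    have oH : outdeg H j = 0%N by lia.
    have [e He] : exists e, e \in [set e in G | e.1.2 == j].
      by apply/set0Pn; rewrite -card_gt0.
    move: He; rewrite inE => /andP[HeG /eqP Ej]; move: HeG; case: e Ej => [[k l] s] /= -> HeG.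
    move: (no_arc_to_isolated HeG); rewrite /is_isolated.
    have sk : is_sink H j by rewrite /is_sink oH.
    rewrite sk andbT => nsrc.
    have iH : (0 < indeg H j)%N by move: nsrc; rewrite /is_source lt0n.
    move: hb; rewrite oH iH eqxx /=; lia.
  + move: hb; case: ifP => cH.
    * exfalso; move/andP: cH => [/eqP oH iH].
      have sG : is_sink G j.
        move: jB; rewrite inE negb_and negbK /is_sink oH eqxx /=; by [].
      move: cG; rewrite (eqP sG) eqxx /=; lia.
    * lia.
Qed.

Lemma main_sec : exists (loX hiX : 'I_n -> int) (f : state n -> state n),
    [/\ fds_on loX hiX f G /\ degree_bounded loX hiX f,
        (forall i, loX i <= loY i /\ hiY i <= hiX i),
        (forall x, inbox loX hiX x -> inbox loY hiY (f x)) /\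
        (forall i, i \notin As -> forall x, inbox loX hiX x ->
            exists y, inbox loY hiY y /\ f x i = h y i),
        (forall x, inbox loY hiY x -> (forall i, i \in Bs -> x i = xi i) ->
            f x = h x) &
        (forall x, inbox loY hiY x -> forall i,
            (forall j s, ((j, i), s) \in G -> j \notin Bs) -> f x i = h x i)].
Proof.
exists loX, hiX, f; split.
- split; first split.
  + split; [exact: loX_hiX | by move=> x _; apply/inY_inX/fY].
  + exact: graphG.
  + move=> G' HG'.
    have -> : G' = G.
      apply/setP => -[[j i] s]; apply/idP/idP => H1.
      * by apply/graphG/HG'.
      * by apply/HG'/graphG.
    exact: dbG.
- exact: XY.
- split; first by move=> x _; exact: fY.
  by move=> i iA x _; exact: part2.
- exact: part3.
- move=> x Hx i HB; exact: part4.
Qed.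

End Main.

Lemma ex_argmax n (P : state n -> Prop) (g : state n -> int) (lo hi : int) z0 :
  P z0 -> (forall z, P z -> lo <= g z <= hi) ->
  exists p, P p /\ forall z, P z -> g z <= g p.
Proof.
move=> P0 Hb.
have [m [[p [Pp Ep]] Hm]] := @ex_max_nat (fun m => exists z, P z /\ g z - lo = m%:Z)
   (absz (hi - lo)) (absz (g z0 - lo))
   ltac:(exists z0; split => //; have := Hb _ P0; lia)
   ltac:(move=> m [z [Pz Ez]]; have := Hb _ Pz; lia).
exists p; split => // z Pz.
have := Hm (absz (g z - lo)) ltac:(exists z; split => //; have := Hb _ Pz; lia).
have := Hb _ Pz; lia.
Qed.

Lemma ex_argmin n (P : state n -> Prop) (g : state n -> int) (lo hi : int) z0 :
  P z0 -> (forall z, P z -> lo <= g z <= hi) ->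
  exists p, P p /\ forall z, P z -> g p <= g z.
Proof.
move=> P0 Hb.
have [m [[p [Pp Ep]] Hm]] := @ex_min_nat (fun m => exists z, P z /\ g z - lo = m%:Z)
   (absz (g z0 - lo))
   ltac:(exists z0; split => //; have := Hb _ P0; lia).
exists p; split => // z Pz.
have := Hm (absz (g z - lo)) ltac:(exists z; split => //; have := Hb _ Pz; lia).
have := Hb _ Pz; lia.
Qed.

Theorem lemma9 (n : nat) (G H : sgraph n)
  (HsubG : H \subset G)
  (no_sink_to_source : forall j i s, ((j, i), s) \in G ->
      ~~ (is_sink H j && is_source H i))
  (no_arc_to_isolated : forall j i s, ((j, i), s) \in G -> ~~ is_isolated H i)
  (loY hiY : 'I_n -> int) (h : state n -> state n)
  (h_on_H : fds_on loY hiY h H) (h_db : degree_bounded loY hiY h)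
  (xi : state n) (xiY : inbox loY hiY xi) :
  let A := [set i | is_source H i && ~~ is_source G i] in
  let B := [set i | is_sink H i && ~~ is_sink G i] in
  exists (loX hiX : 'I_n -> int) (f : state n -> state n),
    [/\ fds_on loX hiX f G /\ degree_bounded loX hiX f,
        (forall i, loX i <= loY i /\ hiY i <= hiX i),
        (* (1) *) (forall x, inbox loX hiX x -> inbox loY hiY (f x)) /\
        (* (2) *) (forall i, i \notin A -> forall x, inbox loX hiX x ->
            exists y, inbox loY hiY y /\ f x i = h y i),
        (* (3) *) (forall x, inbox loY hiY x -> (forall i, i \in B -> x i = xi i) ->
            f x = h x) &
        (* (4) *) (forall x, inbox loY hiY x -> forall i,
            (forall j s, ((j, i), s) \in G -> j \notin B) -> f x i = h x i)].
Proof.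
move=> A B.
have hYb : forall i z, inbox loY hiY z -> loY i <= h z i <= hiY i.
  by move=> i z Hz; apply: (proj2 (proj1 h_on_H)).
have [pmx Hpmx] : exists pmx : 'I_n -> state n, forall i,
    inbox loY hiY (pmx i) /\ forall z, inbox loY hiY z -> h z i <= h (pmx i) i.
  have H1 : forall i, exists p : state n,
      inbox loY hiY p /\ forall z, inbox loY hiY z -> h z i <= h p i.
    move=> i; have [p [Pp Hp]] := @ex_argmax n (inbox loY hiY) (fun z => h z i) (loY i) (hiY i) xi xiY (hYb i).
    by exists p.
  exact: (fin_all_exists H1).
have [pmn Hpmn] : exists pmn : 'I_n -> state n, forall i,
    inbox loY hiY (pmn i) /\ forall z, inbox loY hiY z -> h (pmn i) i <= h z i.
  have H1 : forall i, exists p : state n,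
      inbox loY hiY p /\ forall z, inbox loY hiY z -> h p i <= h z i.
    move=> i; have [p [Pp Hp]] := @ex_argmin n (inbox loY hiY) (fun z => h z i) (loY i) (hiY i) xi xiY (hYb i).
    by exists p.
  exact: (fin_all_exists H1).
exact: (@main_sec n G H HsubG no_sink_to_source no_arc_to_isolated loY hiY h h_on_H h_db xi xiY
  pmx pmn (fun i => proj1 (Hpmx i)) (fun i => proj1 (Hpmn i)) (fun i => proj2 (Hpmx i)) (fun i => proj2 (Hpmn i))).
Qed.
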